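(* Let $w_1,\dots,w_r\in\mathbb{R}^{2n}$ be pairwise distinct points whose real affine span has dimension at least $3$, and let $f(x)=\sum_{i=1}^r\log|x-w_i|^2$ on $\mathbb{R}^{2n}\setminus\{w_1,\dots,w_r\}$. Then at every critical point of $f$ the Hessian of $f$ has positivity index at least $2n-1$.
   Context: $|\cdot|$ is the Euclidean norm. The positivity index of a symmetric bilinear form is the number of positive eigenvalues of its matrix. *)

(* Defs.v *)
From HB Require Import structures.
From Stdlib Require Import Reals Classical ClassicalEpsilon FunctionalExtensionality.
From mathcomp Require Import all_boot all_order all_algebra.
Set Implicit Arguments. Unset Strict Implicit. Unset Printing Implicit Defensive.

Definition Req_bool (x y : R) : bool := if Req_EM_T x y then true else false.
Lemma Req_boolP : Equality.axiom Req_bool.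
Proof. move=> x y; rewrite /Req_bool; case: Req_EM_T => H; constructor => //. Qed.
HB.instance Definition _ := hasDecEq.Build R Req_boolP.

Definition R_find (P : pred R) (n : nat) : option R :=
  match excluded_middle_informative (exists x, P x) with
  | left H => Some (proj1_sig (constructive_indefinite_description _ H))
  | right _ => None
  end.
Lemma R_find_correct P n x : R_find P n = Some x -> P x.
Proof.
rewrite /R_find; case: excluded_middle_informative => // H [<-].
exact: proj2_sig (constructive_indefinite_description _ H).
Qed.
Lemma R_find_complete (P : pred R) : (exists x, P x) -> exists n, R_find P n.
Proof. by move=> H; exists 0%N; rewrite /R_find; case: excluded_middle_informative. Qed.
Lemma R_find_ext (P Q : pred R) : P =1 Q -> R_find P =1 R_find Q.
Proof. by move=> /functional_extensionality ->. Qed.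
HB.instance Definition _ := hasChoice.Build R R_find_correct R_find_complete R_find_ext.

Lemma R_addA : ssrfun.associative Rplus. Proof. by move=> *; rewrite Rplus_assoc. Qed.
Lemma R_addC : ssrfun.commutative Rplus. Proof. exact: Rplus_comm. Qed.
Lemma R_add0 : ssrfun.left_id R0 Rplus. Proof. exact: Rplus_0_l. Qed.
Lemma R_addN : ssrfun.left_inverse R0 Ropp Rplus. Proof. exact: Rplus_opp_l. Qed.
HB.instance Definition _ := GRing.isZmodule.Build R R_addA R_addC R_add0 R_addN.

Lemma R_mulA : ssrfun.associative Rmult. Proof. by move=> *; rewrite Rmult_assoc. Qed.
Lemma R_mulC : ssrfun.commutative Rmult. Proof. exact: Rmult_comm. Qed.
Lemma R_mul1 : ssrfun.left_id R1 Rmult. Proof. exact: Rmult_1_l. Qed.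
Lemma R_mulDl : ssrfun.left_distributive Rmult Rplus. Proof. exact: Rmult_plus_distr_r. Qed.
Lemma R_one_neq0 : (R1 : R) != R0.
Proof. by apply/eqP; exact: R1_neq_R0. Qed.
HB.instance Definition _ :=
  GRing.Zmodule_isComNzRing.Build R R_mulA R_mulC R_mul1 R_mulDl R_one_neq0.

Definition R_inv (x : R) : R := if Req_EM_T x 0%R then 0%R else Rinv x.
Lemma R_mulVf (x : R) : x != 0%R -> GRing.mul (R_inv x) x = 1%R.
Proof.
move=> Hx; rewrite /R_inv; case: Req_EM_T => [E|NE].
  by rewrite E eqxx in Hx.
exact: Rinv_l.
Qed.
Lemma R_inv0 : R_inv 0%R = 0%R.
Proof. by rewrite /R_inv; case: Req_EM_T. Qed.
HB.instance Definition _ := GRing.ComNzRing_isField.Build R R_mulVf R_inv0.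

Import GRing.Theory.
Local Open Scope ring_scope.

Definition sqnorm (m : nat) (x : 'rV[R]_m) : R := \sum_(k < m) x 0 k * x 0 k.

Definition logpot (m r : nat) (w : 'I_r -> 'rV[R]_m) (x : 'rV[R]_m) : R :=
  \sum_(i < r) ln (sqnorm (x - w i)).

Definition off_points (m r : nat) (w : 'I_r -> 'rV[R]_m) (x : 'rV[R]_m) : Prop :=
  forall i, x <> w i.

Definition basis_vec (m : nat) (j : 'I_m) : 'rV[R]_m := delta_mx 0 j.

Definition has_partial (m : nat) (g : 'rV[R]_m -> R) (x : 'rV[R]_m) (j : 'I_m) (l : R)
  : Prop := derivable_pt_lim (fun t : R => g (x + t *: basis_vec j)) 0%R l.

Definition critical_point (m : nat) (U : 'rV[R]_m -> Prop) (g : 'rV[R]_m -> R)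
  (x : 'rV[R]_m) : Prop :=
  U x /\ forall j, has_partial g x j 0%R.

Definition is_hessian (m : nat) (U : 'rV[R]_m -> Prop) (g : 'rV[R]_m -> R)
  (x : 'rV[R]_m) (H : 'M[R]_m) : Prop :=
  exists D : 'I_m -> 'rV[R]_m -> R,
    (forall y, U y -> forall i, has_partial g y i (D i y)) /\
    (forall i j, has_partial (D i) x j (H i j)).

(* positivity index: number of positive eigenvalues, counted with (algebraic)
   multiplicity, i.e. sum of multiplicities of positive roots of char_poly *)
Definition positivity_index (m : nat) (H : 'M[R]_m) (k : nat) : Prop :=
  exists s : seq R,
    [/\ uniq s,
        (forall x : R, x \in s <-> Rlt R0 x /\ root (char_poly H) x) &
        k = (\sum_(x <- s) mup x (char_poly H))%N].

(* dimension of the real affine span of the points w_i: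
   dimension of the linear span of all differences w_i - w_j *)
Definition affine_span_dim (m r : nat) (w : 'I_r -> 'rV[R]_m) : nat :=
  \rank (\sum_(i < r) \sum_(j < r) <<w i - w j>>)%MS.

(* Main.v *)
Require Import Defs.
From HB Require Import structures.
From Stdlib Require Import Reals FunctionalExtensionality.
From mathcomp Require Import all_boot all_order all_algebra.
From mathcomp Require Import complex sesquilinear spectral.
From mathcomp Require Import ring lra zify.
Import GRing.Theory Order.TTheory Num.Theory.
Local Open Scope ring_scope.

Local Open Scope ring_scope.

Section S.
Local Open Scope R_scope.
Definition Rleb r1 r2 := if Rle_dec r1 r2 is left _ then true else false.
Definition Rltb r1 r2 := Rleb r1 r2 && (r1 != r2).
Lemma RlebP r1 r2 : reflect (r1 <= r2) (Rleb r1 r2).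
Proof. by rewrite /Rleb; apply: (iffP idP); case: Rle_dec. Qed.
Lemma RltbP r1 r2 : reflect (r1 < r2) (Rltb r1 r2).
Proof.
rewrite /Rltb /Rleb; apply: (iffP idP); case: Rle_dec=> //=.
- by case=> // r1Er2 /eqP[].
- by move=> _ r1Lr2; apply/eqP/Rlt_not_eq.
by move=> Nr1Lr2 r1Lr2; case: Nr1Lr2; left.
Qed.
Lemma Rleb_norm_add x y : Rleb (Rabs (x + y)) (Rabs x + Rabs y).
Proof. by apply/RlebP/Rabs_triang. Qed.
Lemma addr_Rgtb0 x y : Rltb 0 x -> Rltb 0 y -> Rltb 0 (x + y).
Proof. by move/RltbP=> Hx /RltbP Hy; apply/RltbP/Rplus_lt_0_compat. Qed.
Lemma Rnorm0_eq0 x : Rabs x = 0 -> x = 0.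
Proof. by move=> H; case: (x == 0) /eqP=> // /Rabs_no_R0. Qed.
Lemma Rleb_leVge x y : Rleb 0 x -> Rleb 0 y -> (Rleb x y) || (Rleb y x).
Proof.
move/RlebP=> Hx /RlebP Hy; case: (Rlt_le_dec x y).
by move/Rlt_le/RlebP=> ->.
by move/RlebP=> ->; rewrite orbT.
Qed.
Lemma RnormM : {morph Rabs : x y / x * y}.
Proof. exact: Rabs_mult. Qed.
Lemma Rleb_def x y : (Rleb x y) = (Rabs (y - x) == y - x).
Proof.
apply/(sameP (RlebP x y))/(iffP idP)=> [/eqP H| /Rle_minus H].
  apply: Rminus_le; rewrite -Ropp_minus_distr.
  apply/Rge_le/Ropp_0_le_ge_contravar.
  by rewrite -H; apply: Rabs_pos.
apply/eqP/Rabs_pos_eq.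
rewrite -Ropp_minus_distr.
by apply/Ropp_0_ge_le_contravar/Rle_ge.
Qed.
Lemma Rltb_def x y : (Rltb x y) = (y != x) && (Rleb x y).
Proof.
apply/(sameP (RltbP x y))/(iffP idP).
  case/andP=> /eqP H /RlebP/Rle_not_gt H2.
  by case: (Rtotal_order x y)=> // [][] // /esym.
move=> H; apply/andP; split; [apply/eqP|apply/RlebP].
  exact: Rgt_not_eq.
exact: Rlt_le.
Qed.
End S.
HB.instance Definition _ := Num.IntegralDomain_isNumRing.Build R
  Rleb_norm_add addr_Rgtb0 Rnorm0_eq0 Rleb_leVge RnormM Rleb_def Rltb_def.
Lemma RleP : forall x y, reflect (Rle x y) (x <= y)%R.
Proof. exact: RlebP. Qed.
Lemma RltP : forall x y, reflect (Rlt x y) (x < y)%R.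
Proof. exact: RltbP. Qed.
Lemma R_total : total (<=%O : rel R).
Proof.
move=> x y; case: (Rle_lt_dec x y) => [/RleP -> //|/Rlt_le/RleP ->];
  by rewrite orbT.
Qed.
HB.instance Definition _ := Order.POrder_isTotal.Build _ R R_total.

Lemma continuity_eq f g : f =1 g -> continuity f -> continuity g.
Proof.
move=> Hfg Hf x eps Heps.
have [y [Hy1 Hy2]]:= Hf x eps Heps.
by exists y; split=> // z; rewrite -!Hfg; exact: Hy2.
Qed.
Lemma continuity_poly (p : {poly R}) : continuity (fun x => p.[x]).
Proof.
elim/poly_ind: p => [|p c IH].
  apply: (@continuity_eq (fun _ => 0)); first by move=> x; rewrite horner0.
  by apply: continuity_const => ? ?.
apply: (@continuity_eq (fun x => Rplus (Rmult p.[x] x) c)).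
  by move=> x; rewrite hornerMXaddC.
apply: continuity_plus; last by apply: continuity_const => ? ?.
apply: continuity_mult => //; exact: (derivable_continuous _ derivable_id).
Qed.
Lemma Rreal_closed_axiom : Num.real_closed_axiom R.
Proof.
move=> p a b; rewrite !le_eqVlt.
case Hpa: ((p.[a])%R == 0%R).
  by move=> ? _ ; exists a=> //; rewrite lexx le_eqVlt.
case Hpb: ((p.[b])%R == 0%R).
  by move=> ? _; exists b=> //; rewrite lexx le_eqVlt andbT.
have [->|Hab] := eqVneq a b.
  by move=> _; rewrite eq_sym Hpb (ltNge 0) /=; case/andP=> /ltW ->.
rewrite eq_sym Hpb /=; clear=> /RltP Hab /andP[/RltP Hpa /RltP Hpb].
suff Hcp : continuity (fun x => (p.[x])%R).
  have [z [[Hza Hzb] /eqP Hz2]]:= IVT _ a b Hcp Hab Hpa Hpb.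
  by exists z=> //; apply/andP; split; apply/RleP.
exact: continuity_poly.
Qed.
HB.instance Definition _ := Num.RealField_isClosed.Build R Rreal_closed_axiom.


Set Implicit Arguments.
Local Open Scope ring_scope.

Lemma RinvE (x : R) : x^-1 = Rinv x.
Proof. rewrite /GRing.inv /= /R_inv; case: Req_EM_T => E //=; by rewrite E Rinv_0. Qed.
Lemma RplusE (x y : R) : Rplus x y = x + y. Proof. by []. Qed.
Lemma RmultE (x y : R) : Rmult x y = x * y. Proof. by []. Qed.
Lemma RminusE (x y : R) : Rminus x y = x - y. Proof. by []. Qed.
Lemma RoppE (x : R) : Ropp x = - x. Proof. by []. Qed.
Lemma RdivE (x y : R) : Rdiv x y = x / y. Proof. by rewrite /Rdiv RinvE. Qed.
Lemma R0E : R0 = 0 :> R. Proof. by []. Qed.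
Lemma R1E : R1 = 1 :> R. Proof. by []. Qed.

Notation dpl := derivable_pt_lim.

Lemma D_eq f g x l l' : dpl f x l -> (forall t, f t = g t) -> l = l' -> dpl g x l'.
Proof. by move=> H /functional_extensionality <- <-. Qed.
Ltac deq X := let H := fresh "Hdeq" in have H := X; refine (@D_eq _ _ _ _ _ H _ _); clear H.

Lemma D_const (c : R) x : dpl (fun _ => c) x 0.
Proof. exact: derivable_pt_lim_const. Qed.
Lemma D_id x : dpl (fun t => t) x 1.
Proof. exact: derivable_pt_lim_id. Qed.
Lemma D_add f g a b x : dpl f x a -> dpl g x b -> dpl (fun t => f t + g t) x (a + b).
Proof. move=> Hf Hg; by deq (derivable_pt_lim_plus _ _ _ _ _ Hf Hg). Qed.
Lemma D_mul f g a b x : dpl f x a -> dpl g x b ->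
  dpl (fun t => f t * g t) x (a * g x + f x * b).
Proof. move=> Hf Hg; by deq (derivable_pt_lim_mult _ _ _ _ _ Hf Hg). Qed.
Lemma D_inv f a x : f x != 0 -> dpl f x a -> dpl (fun t => (f t)^-1) x (- a / (f x ^+ 2)).
Proof.
move=> /eqP nz Hf.
deq (derivable_pt_lim_div _ _ _ _ _ (D_const 1 x) Hf nz).
  by move=> t; rewrite /div_fct /Rdiv -RinvE RmultE mul1r.
rewrite /Rdiv /Rsqr -RinvE !RmultE RminusE ?R0E ?R1E.
by rewrite mul0r sub0r mulr1 expr2 mulNr.
Qed.
Lemma D_ln f a x : 0 < f x -> dpl f x a -> dpl (fun t => ln (f t)) x (a / f x).
Proof.
move=> /RltP pos Hf.
deq (derivable_pt_lim_comp _ _ _ _ _ Hf (derivable_pt_lim_ln _ pos)); first by [].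
by rewrite RinvE mulrC.
Qed.
Lemma D_sum (I : finType) (F : I -> R -> R) (dF : I -> R) x :
  (forall i, dpl (F i) x (dF i)) -> dpl (fun t => \sum_i F i t) x (\sum_i dF i).
Proof.
move=> HF; rewrite unlock /reducebig.
elim: (index_enum I) => [|a s IH] /=; first exact: D_const.
exact: D_add.
Qed.

Arguments D_sum {I F dF x}.
Lemma D_loc f g x l (d : R) : 0 < d -> (forall t, Rabs (t - x) < d -> f t = g t) ->
  dpl f x l -> dpl g x l.
Proof.
move=> /RltP dpos E Hf eps epos.
have [del Hd] := Hf eps epos.
have mpos : Rlt 0 (Rmin del d) by apply: Rmin_pos; [apply: cond_pos | exact: dpos].
exists (mkposreal _ mpos) => h hn0 hlt /=.
have hd : Rlt (Rabs h) del by apply: Rlt_le_trans hlt (Rmin_l _ _).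
have hd2 : Rlt (Rabs h) d by apply: Rlt_le_trans hlt (Rmin_r _ _).
rewrite -!E; first exact: Hd.
- by rewrite /Rminus Rplus_opp_r Rabs_R0; apply/RltP.
- by apply/RltP; rewrite /Rminus Rplus_comm -Rplus_assoc Rplus_opp_l Rplus_0_l.
Qed.
Arguments D_const (c x)%_ring_scope.
Arguments D_id x%_ring_scope.

Set Implicit Arguments.
Local Open Scope ring_scope.

Lemma entry_shift m (y : 'rV[R]_m) j t k :
  (y + t *: basis_vec j) 0 k = y 0 k + t * (j == k)%:R.
Proof. by rewrite !mxE /= eq_sym. Qed.

Lemma sum_delta m (j : 'I_m) (F : 'I_m -> R) : \sum_k (j == k)%:R * F k = F j.
Proof.
rewrite (bigD1 j) //= eqxx mul1r big1 ?addr0 // => k /negPf.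
by rewrite eq_sym => ->; rewrite mul0r.
Qed.

Lemma D_sqnorm m (z : 'rV[R]_m) j t0 :
  dpl (fun t => sqnorm (z + t *: basis_vec j)) t0 (2 * (z + t0 *: basis_vec j) 0 j).
Proof.
rewrite /sqnorm.
have H k : dpl (fun t => (z 0 k + t * (j == k)%:R) * (z 0 k + t * (j == k)%:R)) t0
   ((j == k)%:R * (z 0 k + t0 * (j == k)%:R) + (z 0 k + t0 * (j == k)%:R) * (j == k)%:R).
  apply: D_mul; (deq (D_add (@D_const (z 0 k) t0) (D_mul (D_id t0) (@D_const (j == k)%:R t0))); [by [] | by rewrite mul1r mulr0 add0r addr0]).
deq (D_sum H).
  by move=> t; apply: eq_bigr => k _; rewrite !entry_shift.
transitivity (\sum_k (j == k)%:R * (2 * (z 0 k + t0 * (j == k)%:R))); last first.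
  by rewrite (@sum_delta _ j (fun k => 2 * (z 0 k + t0 * (j == k)%:R))) entry_shift.
apply: eq_bigr => k _; case: (j == k); rewrite /=; ring.
Qed.

Lemma sqnorm_ge0 m (z : 'rV[R]_m) : 0 <= sqnorm z.
Proof. by apply: sumr_ge0 => k _; rewrite -expr2 sqr_ge0. Qed.

Lemma sqnorm_gt0 m (z : 'rV[R]_m) : z != 0 -> 0 < sqnorm z.
Proof.
move=> zn0.
have [k hk] : exists k, z 0 k != 0.
  apply/existsP; apply: contraNT zn0; rewrite negb_exists => /forallP zk.
  by apply/eqP/rowP => k; rewrite mxE; apply/eqP; move: (zk k); rewrite negbK.
rewrite /sqnorm (bigD1 k) //= ltr_wpDr ?sumr_ge0 //.
  by move=> i _; rewrite -expr2 sqr_ge0.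
by rewrite lt0r mulf_neq0 //= -expr2 sqr_ge0.
Qed.

Lemma sqnorm_scale_basis m (j : 'I_m) (s : R) : sqnorm (s *: basis_vec j) = s ^+ 2.
Proof.
rewrite /sqnorm -(@sum_delta _ j (fun _ => s ^+ 2)).
by apply: eq_bigr => k _; rewrite !mxE /= eq_sym; case: (j == k); rewrite /= ?mulr0 ?mul0r ?mulr1 ?mul1r ?expr2.
Qed.

Definition gradl m r (w : 'I_r -> 'rV[R]_m) (j : 'I_m) (y : 'rV[R]_m) : R :=
  \sum_l 2 * (y - w l) 0 j / sqnorm (y - w l).

Definition hessl m r (w : 'I_r -> 'rV[R]_m) (x : 'rV[R]_m) (i j : 'I_m) : R :=
  \sum_l (2 / sqnorm (x - w l) * (i == j)%:R
          - (2 / sqnorm (x - w l)) ^+ 2 * (x - w l) 0 i * (x - w l) 0 j).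

Lemma off_sqnorm m r (w : 'I_r -> 'rV[R]_m) y l : off_points w y -> 0 < sqnorm (y - w l).
Proof. by move=> off; apply: sqnorm_gt0; rewrite subr_eq0; apply/eqP; apply: off. Qed.

Lemma partial_logpot m r (w : 'I_r -> 'rV[R]_m) y j :
  off_points w y -> has_partial (logpot w) y j (gradl w j y).
Proof.
move=> off; rewrite /has_partial /logpot /gradl.
have H l : dpl (fun t => ln (sqnorm ((y - w l) + t *: basis_vec j))) 0
   (2 * ((y - w l) + 0 *: basis_vec j) 0 j / sqnorm ((y - w l) + 0 *: basis_vec j)).
  by apply: D_ln; [rewrite scale0r addr0; exact: off_sqnorm | exact: D_sqnorm].
deq (D_sum H).
  by move=> t; apply: eq_bigr => l _; rewrite addrAC.
by apply: eq_bigr => l _; rewrite scale0r addr0.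
Qed.

Lemma D_grad m r (w : 'I_r -> 'rV[R]_m) x i j :
  off_points w x -> dpl (fun t => gradl w i (x + t *: basis_vec j)) 0 (hessl w x i j).
Proof.
move=> off; rewrite /gradl /hessl.
have H l : dpl (fun t => (2 * ((x - w l) + t *: basis_vec j) 0 i) * (sqnorm ((x - w l) + t *: basis_vec j))^-1) 0
   (2 / sqnorm (x - w l) * (i == j)%:R
          - (2 / sqnorm (x - w l)) ^+ 2 * (x - w l) 0 i * (x - w l) 0 j).
  have q0 := off_sqnorm l off.
  have qn0 : sqnorm (x - w l) != 0 by rewrite gt_eqF.
  have Hn : dpl (fun t => 2 * ((x - w l) + t *: basis_vec j) 0 i) 0 (2 * (j == i)%:R).
    deq (D_mul (@D_const 2 0) (D_add (@D_const ((x - w l) 0 i) 0) (D_mul (@D_id 0) (@D_const (j == i)%:R 0)))).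
      by move=> t; rewrite entry_shift.
    by rewrite !mul0r !add0r mul1r addr0.
  have Hd := fun nz => D_inv nz (D_sqnorm (x - w l) j 0).
  deq (D_mul Hn (Hd ltac:(by rewrite scale0r addr0))); first by [].
    rewrite !scale0r !addr0 eq_sym; field.
    exact: qn0.
deq (D_sum H).
  by move=> t; apply: eq_bigr => l _; rewrite addrAC.
by [].
Qed.

Lemma exists_lb (I : finType) (f : I -> R) : (forall i, 0 < f i) ->
  exists mu : R, [/\ 0 < mu, mu <= 1 & forall i, mu <= f i].
Proof.
move=> fpos.
suff [mu [m0 m1 H]] : exists mu : R,
    [/\ 0 < mu, mu <= 1 & forall i, i \in index_enum I -> mu <= f i].
  by exists mu; split=> // i; apply: H; rewrite mem_index_enum.
elim: (index_enum I) => [|a s [mu [m0 m1 H]]].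
  by exists 1; split=> //; rewrite ltr01.
exists (Order.min mu (f a)); split.
- by rewrite lt_min m0 fpos.
- by rewrite ge_min m1.
- move=> i; rewrite inE => /orP[/eqP->|/H h]; rewrite ge_min ?lexx ?orbT ?h //.
Qed.

Lemma near_off m r (w : 'I_r -> 'rV[R]_m) x j : off_points w x ->
  exists d : R, 0 < d /\ forall t, Rabs (t - 0) < d -> off_points w (x + t *: basis_vec j).
Proof.
move=> off.
have [mu [m0 m1 H]] := @exists_lb _ (fun l => sqnorm (x - w l)) (fun l => off_sqnorm l off).
exists mu; split=> // t tlt0 l E.
have tlt : `|t| < mu by move: tlt0; rewrite /Rminus Ropp_0 Rplus_0_r.
have E2 : x - w l = (- t) *: basis_vec j by rewrite -E opprD addrA subrr add0r scaleNr.
have := H l; rewrite E2 sqnorm_scale_basis sqrrN -real_normK ?num_real //.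
have t0 : 0 <= `|t| by [].
have t1 : `|t| <= 1 by apply: ltW; apply: lt_le_trans m1.
have : `|t| ^+ 2 <= `|t| by rewrite expr2 ler_piMr.
move: tlt.
move=> a b c; have := le_trans c b.
by rewrite leNgt a.
Qed.

Lemma hessian_eq m r (w : 'I_r -> 'rV[R]_m) x H :
  off_points w x -> is_hessian (off_points w) (logpot w) x H ->
  forall i j, H i j = hessl w x i j.
Proof.
move=> off [D [HD HH]] i j.
have [d [d0 Hd]] := near_off j off.
apply: uniqueness_limite (HH i j) _.
have E : forall t, Rabs (t - 0) < d ->
    gradl w i (x + t *: basis_vec j) = D i (x + t *: basis_vec j).
  move=> t /Hd offt.
  exact: uniqueness_limite (partial_logpot i offt) (HD _ offt i).
exact (@D_loc _ _ _ _ _ d0 E (D_grad i j off)).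
Qed.

Set Implicit Arguments. Unset Strict Implicit. Unset Printing Implicit Defensive.
Local Open Scope ring_scope.
Local Open Scope sesquilinear_scope.

Section Key.
Variable C : numClosedFieldType.

Lemma dot_entry m (r : 'rV[C]_m) : (r *m r^t*) 0 0 = \sum_k r 0 k * (r 0 k)^*.
Proof. by rewrite !mxE; apply: eq_bigr => k _; rewrite !mxE. Qed.

Lemma dot_ge0 m (r : 'rV[C]_m) : 0 <= (r *m r^t*) 0 0.
Proof. by rewrite dot_entry sumr_ge0 // => k _; rewrite mul_conjC_ge0. Qed.

Lemma dot_eq0 m (r : 'rV[C]_m) : (r *m r^t*) 0 0 = 0 -> r = 0.
Proof.
rewrite dot_entry => /psumr_eq0P H; apply/rowP => k; rewrite mxE.
by apply/eqP; rewrite -mul_conjC_eq0 H // => i _; rewrite mul_conjC_ge0.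
Qed.

Lemma tCM m n p (A : 'M[C]_(m, n)) (B : 'M[C]_(n, p)) : (A *m B)^t* = B^t* *m A^t*.
Proof. by rewrite trmx_mul map_mxM. Qed.

Lemma tCB m n (A B : 'M[C]_(m, n)) : (A - B)^t* = A^t* - B^t*.
Proof. by rewrite linearB /= map_mxB. Qed.

Lemma key m r (u : 'I_r -> 'rV[C]_m) (c : 'I_r -> C) (E : 'M[C]_(2, m)) :
  (forall l, (u l)^t* = (u l)^T) ->
  (forall l, 0 < c l) ->
  (forall l, c l * (u l *m (u l)^T) 0 0 = 2) ->
  E *m E^t* = 1%:M ->
  \tr (E *m (\sum_l (c l *: 1%:M - c l ^+ 2 *: ((u l)^T *m u l))) *m E^t*) <= 0 ->
  forall l, (u l <= E)%MS.
Proof.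
move=> ureal cpos cq EE tr0.
pose Pr := E^t* *m E.
have PrPr : Pr *m Pr = Pr by rewrite /Pr mulmxA -[E^t* *m E *m E^t*]mulmxA EE mulmx1.
have Prt : Pr^t* = Pr by rewrite /Pr tCM trmxCK.
pose res l := u l - u l *m Pr.
have Tl l : \tr (E *m (c l *: 1%:M - c l ^+ 2 *: ((u l)^T *m u l)) *m E^t*)
    = c l ^+ 2 * ((res l *m (res l)^t*) 0 0).
  rewrite /res tCB tCM Prt ureal.
  rewrite mulmxBr mulmxBl !mulmxBl !mulmxBr.
  rewrite -scalemxAr mulmx1 -scalemxAl EE -scalemxAr -scalemxAl.
  rewrite linearB /= !mxtraceZ mxtrace1.
  have -> : \tr (E *m ((u l)^T *m u l) *m E^t*) = (u l *m Pr *m (u l)^T) 0 0.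
    by rewrite mulmxA -mulmxA mxtrace_mulC trace_mx11 /Pr !mulmxA.
  rewrite !mulmxA -[u l *m E^t* *m E *m E^t*]mulmxA EE mulmx1 subrr subr0.
  have e (A B : 'M[C]_1) : (A - B) 0 0 = A 0 0 - B 0 0 by rewrite !mxE.
  rewrite e -(cq l).
  by rewrite expr2; ring.
have sumE : \tr (E *m (\sum_l (c l *: 1%:M - c l ^+ 2 *: ((u l)^T *m u l))) *m E^t*)
    = \sum_l c l ^+ 2 * ((res l *m (res l)^t*) 0 0).
  rewrite mulmx_sumr mulmx_suml linear_sum; apply: eq_bigr => l _; exact: Tl.
have ge l : true -> 0 <= c l ^+ 2 * ((res l *m (res l)^t*) 0 0).
  by move=> _; rewrite mulr_ge0 ?dot_ge0 // exprn_ge0 // ltW.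
have sum0 : \sum_l c l ^+ 2 * ((res l *m (res l)^t*) 0 0) = 0.
  by apply/le_anti; rewrite -sumE tr0 /= sumE sumr_ge0.
move=> l; have /eqP := psumr_eq0P ge sum0 (i := l) isT.
rewrite mulf_eq0 expf_eq0 /= (gt_eqF (cpos l)) /= => /eqP /dot_eq0 /eqP.
rewrite /res subr_eq0 => /eqP ->.
by rewrite /Pr mulmxA submxMl.
Qed.

Lemma char_poly_conj m (P B : 'M[C]_m) : P \in unitmx ->
  char_poly (invmx P *m B *m P) = char_poly B.
Proof.
move=> Pu; rewrite /char_poly /char_poly_mx.
set Q := fun M : 'M[C]_m => map_mx (@polyC C) M.
have -> : 'X%:M - Q (invmx P *m B *m P) = Q (invmx P) *m ('X%:M - Q B) *m Q P.
  rewrite mulmxBr mulmxBl /Q !map_mxM scalar_mxC; congr (_ - _).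
  by rewrite -mulmxA -map_mxM mulVmx // map_mx1 mulmx1.
rewrite !det_mulmx mulrC mulrA -det_mulmx -map_mxM mulmxV // map_mx1 det1 mul1r.
by [].
Qed.

Lemma entry_tC m n (X Y : 'M[C]_(m, n)) i j :
  (X *m Y^t*) i j = (row i X *m (row j Y)^t*) 0 0.
Proof. by rewrite !mxE; apply: eq_bigr => k _; rewrite !mxE. Qed.

Lemma spec_facts m (A : 'M[C]_m) : A^t* = A ->
  exists (P : 'M[C]_m) (d : 'rV[C]_m),
   [/\ P *m P^t* = 1%:M, char_poly A = \prod_i ('X - (d 0 i)%:P) &
       forall i, d 0 i = (row i P *m A *m (row i P)^t*) 0 0].
Proof.
move=> hA.
have nA : A \is normalmx by apply/normalmxP; rewrite hA.
have /orthomx_spectralP Aeq := nA.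
set P := spectralmx A in Aeq; set d := spectral_diag A in Aeq.
have Pu : P \is unitarymx by exact: spectral_unitarymx.
have PP : P *m P^t* = 1%:M by apply/unitarymxP.
have Pinv : invmx P = P^t* by rewrite invmx_unitary.
have Punit : P \in unitmx by exact: unitarymx_unit.
exists P, d; split => //.
  rewrite Aeq char_poly_conj // char_poly_trig ?diag_mx_is_trig //.
  by apply: eq_bigr => i _; rewrite mxE eqxx mulr1n.
move=> i.
have PAP : P *m A *m P^t* = diag_mx d.
  rewrite Aeq Pinv !mulmxA PP mul1mx -mulmxA PP mulmx1 //.
have := congr1 (fun M : 'M[C]_m => M i i) PAP.
rewrite /= [X in X = _ -> _]entry_tC row_mul [X in _ = X -> _]mxE eqxx mulr1n => <-.
by [].
Qed.
End Key.

Set Implicit Arguments. Unset Strict Implicit. Unset Printing Implicit Defensive.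
Local Open Scope ring_scope.
Local Open Scope sesquilinear_scope.

Lemma mup_map (F K : fieldType) (f : {rmorphism F -> K}) x (p : {poly F}) :
  p != 0 -> mup (f x) (map_poly f p) = mup x p.
Proof.
move=> pn0.
have pn0' : map_poly f p != 0 by rewrite map_poly_eq0.
have E n : ('X - (f x)%:P) ^+ n = map_poly f (('X - x%:P) ^+ n).
  by rewrite rmorphXn rmorphB /= map_polyX map_polyC.
apply/eqP; rewrite eqn_leq; apply/andP; split.
  by rewrite mup_geq // -(dvdp_map f) -E -mup_geq.
by rewrite mup_geq // E dvdp_map -mup_geq.
Qed.

Lemma sum_count (T : eqType) (t ds : seq T) : uniq t ->
  (\sum_(y <- t) count_mem y ds)%N = count (mem t) ds.
Proof.
elim: t => [|y t IH] /=.
  by move=> _; rewrite big_nil -(count_pred0 ds); apply: eq_count.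
move=> /andP[yt ut]; rewrite big_cons IH //.
rewrite -count_predUI.
have -> : count (predI (pred1 y) (mem t)) ds = 0%N.
  rewrite -(count_pred0 ds); apply: eq_count => z /=.
  by case: eqP => // ->; rewrite (negPf yt).
by rewrite addn0; apply: eq_count => z; rewrite /= !inE.
Qed.

Lemma count_two (T : eqType) (a : pred T) (s : seq T) : uniq s -> (1 < count a s)%N ->
  exists i j, [/\ i \in s, j \in s, i != j, a i & a j].
Proof.
move=> us; rewrite -size_filter.
have uf := filter_uniq a us.
have mf z : z \in filter a s -> a z /\ z \in s by rewrite mem_filter => /andP.
case E: (filter a s) uf mf => [|x [|y t]] //= uf mf _.
have [ax xs] := mf x (mem_head _ _).
have [ay ys] : a y /\ y \in s by apply: mf; rewrite !inE eqxx orbT.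
exists x, y; split => //.
by move: uf; rewrite inE negb_or => /andP[/andP[]].
Qed.

Lemma count_sub_in (T : eqType) (a b : pred T) (s : seq T) :
  (forall z, z \in s -> a z -> b z) -> (count a s <= count b s)%N.
Proof.
elim: s => [|y s IH] //= H; apply: leq_add.
  by case ay: (a y) => //; rewrite (H y (mem_head _ _) ay).
by apply: IH => z zs; apply: H; rewrite inE zs orbT.
Qed.

Notation phi := (real_complex R).

Lemma phi_real (x : R) : phi x \is Num.real.
Proof. by rewrite complex_real. Qed.

Lemma conj_phi (x : R) : (phi x)^* = phi x.
Proof. exact: conj_Creal (phi_real x). Qed.

Lemma map_conj_phi m n (M : 'M[R]_(m, n)) : (map_mx phi M)^t* = map_mx phi (M^T).
Proof. by apply/matrixP => i j; rewrite !mxE conj_phi. Qed.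

Lemma tC00 (C : numClosedFieldType) (M : 'M[C]_1) : (M^t*) 0 0 = (M 0 0)^*.
Proof. by rewrite !mxE. Qed.

Lemma alg m r (v : 'I_r -> 'rV[R]_m) (c : 'I_r -> R) (H : 'M[R]_m) k :
  (forall l, 0 < c l) -> (forall l, c l * (v l *m (v l)^T) 0 0 = 2) ->
  H = \sum_l (c l *: 1%:M - c l ^+ 2 *: ((v l)^T *m v l)) ->
  positivity_index H k -> (2 < \rank (\matrix_l v l))%N -> (m - 1 <= k)%N.
Proof.
move=> cpos cq hH [s [us hs hk]] rk.
pose u l := map_mx phi (v l).
pose cc l := phi (c l).
pose A := map_mx phi H.
have HT : H^T = H.
  rewrite hH linear_sum /=; apply: eq_bigr => l _.
  by rewrite linearB /= !linearZ /= tr_scalar_mx trmx_mul trmxK.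
have hA : A^t* = A by rewrite /A map_conj_phi HT.
have Aform : A = \sum_l (cc l *: 1%:M - cc l ^+ 2 *: ((u l)^T *m u l)).
  rewrite /A hH map_mx_sum; apply: eq_bigr => l _.
  by rewrite map_mxB !map_mxZ map_mx1 map_mxM map_trmx rmorphXn.
have [P [d [PP chA dE]]] := spec_facts hA.
set ds := [seq d 0 i | i <- enum 'I_m].
have chH : map_poly phi (char_poly H) = \prod_(y <- ds) ('X - y%:P).
  by rewrite map_char_poly chA big_map enumT [index_enum _]unlock.
have cpH : char_poly H != 0 := monic_neq0 (char_poly_monic H).
have mupE x : mup x (char_poly H) = count_mem (phi x) ds.
  by rewrite -(mup_map phi) // chH mu_prod_XsubC.
have kE : k = count (mem (map phi s)) ds.
  rewrite hk -sum_count ?map_inj_uniq //; last exact: complexI.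
  by rewrite big_map; apply: eq_bigr => x _; rewrite mupE.
have pos_in z : z \in ds -> 0 < z -> z \in map phi s.
  move=> zds z0.
  have /complex_realP [kk kkE] := gtr0_real z0.
  rewrite kkE; apply: map_f; apply/hs; split.
    by apply/RltP; move: z0; rewrite kkE -[0 : R[i]]/(phi 0) ltcR.
  by rewrite -(fmorph_root phi) chH root_prod_XsubC; move: zds; rewrite kkE.
have cnt_le : (count (fun z : R[i] => (0 < z)%R) ds <= k)%N.
  by rewrite kE; apply: count_sub_in => z zds /pos_in; apply.
have dreal i : d 0 i \is Num.real.
  rewrite dE CrealE; apply/eqP.
  rewrite -tC00 !tCM trmxCK hA mulmxA //.
have ureal l : (u l)^t* = (u l)^T by rewrite /u map_conj_phi map_trmx.
have ccpos l : 0 < cc l by rewrite /cc -[0 : R[i]]/(phi 0) ltcR.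
have ccq l : cc l * (u l *m (u l)^T) 0 0 = 2.
  by rewrite /cc /u map_trmx -map_mxM mxE -rmorphM cq rmorph_nat.
have orth a b : row a P *m (row b P)^t* = ((a == b)%:R)%:M.
  by rewrite [LHS]mx11_scalar -entry_tC PP mxE.
have cnt_np : (count (fun z : R[i] => ~~ (0 < z)%R) ds <= 1)%N.
  rewrite /ds count_map leqNgt; apply/negP => /(count_two (enum_uniq _)).
  move=> [i [j [_ _ ij ni nj]]].
  have di : d 0 i <= 0 by rewrite (real_leNgt (dreal i) (real0 _)).
  have dj : d 0 j <= 0 by rewrite (real_leNgt (dreal j) (real0 _)).
  pose E := col_mx (row i P) (row j P).
  have EE : E *m E^t* = 1%:M.
    rewrite /E tr_col_mx map_row_mx mul_col_row !orth eqxx (negPf ij) eq_sym (negPf ij).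
    rewrite /=.
    have z0 : (0 : R[i])%:M = 0 :> 'M_1 by apply/matrixP => a b; rewrite !mxE mul0rn.
    by rewrite z0 eqxx -scalar_mx_block.
  have trE : \tr (E *m A *m E^t*) = d 0 i + d 0 j.
    rewrite /E tr_col_mx map_row_mx mul_col_mx mul_col_row mxtrace_block !trace_mx11 -!dE //.
  have Hkey := key ureal ccpos ccq EE.
  have sub : (map_mx phi (\matrix_l v l) <= E)%MS.
    apply/row_subP => l; rewrite -map_row rowK; apply: Hkey.
    by rewrite -Aform trE; have := lerD di dj; rewrite addr0.
  have := leq_trans (mxrankS sub) (rank_leq_row E).
  by rewrite mxrank_map leqNgt rk.
have := count_predC (fun z : R[i] => (0 < z)%R) ds.
rewrite size_map size_enum_ord.
move: cnt_le cnt_np; rewrite /predC.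
set c1 := count _ ds; set c2 := count _ ds.
lia.
Qed.

Unset Implicit Arguments.
Close Scope sesquilinear_scope.

Local Open Scope ring_scope.

Lemma rank_aff m r (w : 'I_r -> 'rV[R]_m) (x : 'rV[R]_m) :
  (affine_span_dim w <= \rank (\matrix_l (x - w l)))%N.
Proof.
rewrite /affine_span_dim; apply: mxrankS.
apply/sumsmx_subP => i _; apply/sumsmx_subP => j _.
rewrite genmxE.
have -> : w i - w j = row j (\matrix_l (x - w l)) + (-1) *: row i (\matrix_l (x - w l)).
  by rewrite !rowK scaleN1r opprB [RHS]addrC [RHS]addrA [in RHS]subrK.
by apply: addmx_sub; [exact: row_sub | apply: scalemx_sub; exact: row_sub].
Qed.

Theorem proposition2p4 (n r : nat) (w : 'I_r -> 'rV[R]_(2 * n))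
  (w_inj : injective w) (w_dim : (3 <= affine_span_dim w)%N)
  (x : 'rV[R]_(2 * n)) (H : 'M[R]_(2 * n)) (k : nat) :
  critical_point (off_points w) (logpot w) x ->
  is_hessian (off_points w) (logpot w) x H ->
  positivity_index H k ->
  (2 * n - 1 <= k)%N.
Proof.
move=> [off _] hH pk.
have Hij := hessian_eq off hH.
pose v l := x - w l.
pose c l := 2 / sqnorm (v l).
have qpos l : 0 < sqnorm (v l) := off_sqnorm l off.
have vv l : (v l *m (v l)^T) 0 0 = sqnorm (v l).
  by rewrite !mxE; apply: eq_bigr => k0 _; rewrite !mxE.
apply: (@alg _ _ v c H k) => //.
- by move=> l; rewrite /c divr_gt0 // ltr0n.
- by move=> l; rewrite vv /c divfK // gt_eqF.
- apply/matrixP => a b; rewrite Hij /hessl summxE; apply: eq_bigr => l _.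
  rewrite !mxE big_ord1 !mxE /c /v.
  by rewrite mulrA.
- exact: leq_trans w_dim (@rank_aff _ _ w x).
Qed.
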